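(* Let $b_1\ge b_2\ge\cdots\ge b_m>0$ be real numbers and let $k\in[m-1]$. Then $$1-\frac km\le\delta_k:=\frac{\sum_{S\subset[m-1],|S|=k}\mathbf{b}^S}{\sum_{S\subset[m],|S|=k}\mathbf{b}^S}\le\min\Big\{1,\frac{b_1}{b_m}\Big(1-\frac km\Big)\Big\}.$$
   Context: For $S\subset[m]$, $\mathbf{b}^S=\prod_{i\in S}b_i$. *)

(* Defs.v *)
From mathcomp Require Import all_boot all_order all_algebra.
Set Implicit Arguments. Unset Strict Implicit. Unset Printing Implicit Defensive.
Import Order.TTheory GRing.Theory Num.Theory.
Local Open Scope ring_scope.

Definition bpow (R : realFieldType) (m : nat) (b : 'I_m -> R) (S : {set 'I_m}) : R :=
  \prod_(i in S) b i.

Definition esum_all (R : realFieldType) (m : nat) (b : 'I_m -> R) (k : nat) : R :=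
  \sum_(S : {set 'I_m} | #|S| == k) bpow b S.

(* sum over k-subsets of [m-1], i.e. subsets avoiding the last index ord_max *)
Definition esum_drop_last (R : realFieldType) (n : nat) (b : 'I_n.+1 -> R) (k : nat) : R :=
  \sum_(S : {set 'I_n.+1} | (#|S| == k) && (ord_max \notin S)) bpow b S.

Definition delta (R : realFieldType) (n : nat) (b : 'I_n.+1 -> R) (k : nat) : R :=
  esum_drop_last b k / esum_all b k.

(* Main.v *)
Require Import Defs.
From mathcomp Require Import all_boot all_order all_algebra all_fingroup.
From mathcomp Require Import ring.
Import Order.TTheory GRing.Theory Num.Theory.
Local Open Scope ring_scope.

Section Aux.
Variables (R : realFieldType) (n : nat) (b : 'I_n.+1 -> R) (k : nat).
Hypothesis hmon : forall i j : 'I_n.+1, (i <= j)%N -> b j <= b i.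
Hypothesis hpos : forall i, 0 < b i.

Definition ew (i : 'I_n.+1) : R :=
  \sum_(S : {set 'I_n.+1} | (#|S| == k) && (i \notin S)) bpow b S.

Lemma ew_reindex i : ew i =
  \sum_(S : {set 'I_n.+1} | (#|S| == k) && (ord_max \notin S))
     \prod_(j in S) b (tperm i ord_max j).
Proof.
have inj : injective (fun S : {set 'I_n.+1} => (tperm i ord_max) @: S).
  by apply: imset_inj; apply: perm_inj.
rewrite /ew (reindex_inj inj).
apply: eq_big => S.
  rewrite card_imset; last exact: perm_inj.
  by rewrite -{1}(tpermR i ord_max) mem_imset //; apply: perm_inj.
move=> _; rewrite /bpow big_imset //.
by move=> x y _ _; apply: perm_inj.
Qed.

Lemma prod_le i (S : {set 'I_n.+1}) : ord_max \notin S ->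
  \prod_(j in S) b (tperm i ord_max j) <= \prod_(j in S) b j.
Proof.
move=> hS; apply: ler_prod => j jS.
rewrite ltW ?hpos //=.
case: tpermP => [->||/eqP ? /eqP ?] //.
- by apply: hmon; rewrite -ltnS ltn_ord.
- by move=> ej; move: jS; rewrite ej (negbTE hS).
Qed.

Lemma prod_ge i (S : {set 'I_n.+1}) : ord_max \notin S ->
  b ord_max * \prod_(j in S) b j <= b ord0 * \prod_(j in S) b (tperm i ord_max j).
Proof.
move=> hS.
have eqo : forall j, j \in S -> j != i -> tperm i ord_max j = j.
  move=> j jS ji; apply: tpermD; first by rewrite eq_sym.
  by apply/eqP => ej; rewrite ej jS in hS.
have h0 : b ord_max <= b ord0 by apply: hmon.
have hm0 : 0 <= b ord_max by apply: ltW.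
case iS: (i \in S).
  rewrite (bigD1 i iS) [X in _ <= _ * X](bigD1 i iS) /= tpermL.
  rewrite [X in _ <= _ * (_ * X)](eq_bigr (fun j => b j)); last first.
    by move=> j /andP[jS ji]; rewrite eqo.
  set Q := \prod_(j in S | j != i) b j.
  have hQ : 0 <= Q by apply: prodr_ge0 => j _; apply: ltW.
  rewrite !mulrA.
  apply: ler_wpM2r => //; rewrite [b ord0 * _]mulrC.
  by apply: ler_wpM2l => //; apply: hmon; exact: leq0n.
rewrite [X in _ <= _ * X](eq_bigr (fun j => b j)); last first.
  by move=> j jS; rewrite eqo //; apply/eqP => ej; move: jS; rewrite ej iS.
apply: ler_wpM2r => //; apply: prodr_ge0 => j _; by apply: ltW.
Qed.

Lemma sum_ew : \sum_i ew i = (n.+1 - k)%:R * esum_all b k + (k - n.+1)%:R * 0.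
Proof.
rewrite mulr0 addr0.
rewrite /ew.
under eq_bigr => i _ do rewrite big_mkcondr /=.
rewrite exchange_big /= /esum_all mulr_sumr; apply: eq_bigr => S /eqP hS.
rewrite -big_mkcond /= sumr_const mulrC mulr_natr.
congr (_ *+ _).
have hc := cardsC S; rewrite hS card_ord in hc.
rewrite (_ : (n.+1 - k)%N = #|~: S|); last by rewrite -[in LHS]hc addKn.
by apply: eq_card => j; rewrite inE.
Qed.

End Aux.

(* m = n.+1 ; indices 'I_(n.+1) represent [m] = {1,...,m} shifted by one;
   b_1 = b ord0, b_m = b ord_max. *)
Theorem lemma2p4 (R : realFieldType) (n : nat) (b : 'I_n.+1 -> R) (k : nat) :
  (forall i j : 'I_n.+1, (i <= j)%N -> b j <= b i) ->
  (forall i, 0 < b i) ->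
  (1 <= k <= n)%N ->
  1 - k%:R / n.+1%:R <= delta b k /\
  delta b k <= Num.min 1 (b ord0 / b ord_max * (1 - k%:R / n.+1%:R)).
Proof.
move=> hmon hpos /andP[k1 kn].
set D := esum_drop_last b k.
set E := esum_all b k.
have bpow_ge0 : forall S, 0 <= bpow b S.
  by move=> S; apply: prodr_ge0 => j _; apply: ltW.
have DE : E = D + \sum_(S : {set 'I_n.+1} | (#|S| == k) && (ord_max \in S)) bpow b S.
  by rewrite /E /esum_all (bigID (fun S : {set 'I_n.+1} => ord_max \notin S)) /=
    -/(esum_drop_last b k) -/D; congr (_ + _); apply: eq_bigl => S; rewrite negbK.
have Dpos : 0 < D.
  have hk : (k <= n.+1)%N by apply: leq_trans kn _.
  pose S0 := [set widen_ord hk x | x in 'I_k].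
  have cS0 : #|S0| == k.
    rewrite card_imset ?card_ord //.
    by move=> x y /(congr1 val) /= /val_inj.
  have mS0 : ord_max \notin S0.
    apply/imsetP => -[x _] /(congr1 val) /= ex.
    by have := ltn_ord x; rewrite -ex ltnNge (leq_trans kn) //.
  rewrite /D /esum_drop_last (bigD1 S0) ?cS0 ?mS0 //=.
  rewrite ltr_wpDr //; first by apply: sumr_ge0 => S _; apply: bpow_ge0.
  by apply: prodr_gt0 => j _; apply: hpos.
have Epos : 0 < E.
  by rewrite DE ltr_wpDr //; apply: sumr_ge0 => S _; apply: bpow_ge0.
have hsum := (@sum_ew R n b k).
rewrite mulr0 addr0 natrB in hsum; last by apply: leq_trans kn _.
have ewD : forall i, @ew R n b k i = \sum_(S : {set 'I_n.+1} | (#|S| == k) && (ord_max \notin S))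
     \prod_(j in S) b (tperm i ord_max j) by move=> i; apply: ew_reindex.
have sD : n.+1%:R * D = \sum_(i : 'I_n.+1) D by rewrite sumr_const card_ord mulr_natl.
have lo : (n.+1%:R - k%:R) * E <= n.+1%:R * D.
  rewrite -hsum sD.
  apply: ler_sum => i _; rewrite ewD; apply: ler_sum => S /andP[_ hS]; rewrite /bpow.
  exact: prod_le.
have hi : b ord_max * (n.+1%:R * D) <= b ord0 * ((n.+1%:R - k%:R) * E).
  rewrite -hsum sD !mulr_sumr.
  apply: ler_sum => i _; rewrite ewD /D /esum_drop_last !mulr_sumr.
  apply: ler_sum => S /andP[_ hS]; rewrite /bpow; exact: prod_ge.
have m0 : 0 < n.+1%:R :> R by rewrite ltr0n.
have b0 := hpos ord0; have bm := hpos ord_max.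
have eq1 : 1 - k%:R / n.+1%:R = (n.+1%:R - k%:R) / n.+1%:R :> R.
  by rewrite mulrBl divff // gt_eqF.
rewrite /delta -/D -/E eq1; split.
  by rewrite ler_pdivlMr // mulrAC ler_pdivrMr // [D * _]mulrC.
rewrite le_min; apply/andP; split.
  by rewrite ler_pdivrMr // mul1r DE lerDl sumr_ge0.
rewrite ler_pdivrMr //.
set a := (n.+1%:R - k%:R).
rewrite (_ : b ord0 / b ord_max * (a / n.+1%:R) * E = (b ord0 * (a * E)) / (b ord_max * n.+1%:R)); last first.
  by field; rewrite (gt_eqF bm) andbT addrC natr1 pnatr_eq0.
by rewrite ler_pdivlMr ?mulr_gt0 // mulrC -mulrA.
Qed.
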